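(* For every $g\ge n$, $T_p(K^n_g)\subseteq p^n L_g$.
   Context: Let $K$ be an imaginary quadratic field of class number one with ring of integers $O$, $p$ an odd rational prime inert in $K$, $O_p$ the completion of $O$ at $p$. Let $N$ be a nonzero ideal of $O$, $\Gamma=\Gamma_1(Np)\subset SL_2(O)$. For $g\ge0$ let $S_g$ be the homogeneous polynomials of degree $g$ in $O_p[x,y]$ with $\gamma=\begin{pmatrix}a&b\\c&d\end{pmatrix}$ acting by $f(x,y)\mapsto f(ax+cy,bx+dy)$; $S_{g,g}=S_g\otimes S_g$ with $\gamma$ acting on the second factor via the complex conjugate $\bar\gamma$. Fix $n\ge1$; let $M^n_g\subseteq S_g$ be the degree-$g$ component of the ideal $(p,x)^n\subseteq O_p[x,y]$ (it is $\Gamma$-stable), and $W^n_{g,g}=M^n_g\otimes S_g+S_g\otimes M^n_g\subseteq S_{g,g}$. Let $L_g=H^1(\Gamma,S_{g,g})^{TF}$ and let $K^n_g\subseteq L_g$ be the image of $H^1(\Gamma,W^n_{g,g})^{TF}$, where $(\cdot)^{TF}$ denotes the maximal torsion-free quotient. The Hecke operator $T_p$ acts on $H^1(\Gamma,S_{g,g})$ as follows: with $\alpha_u=\begin{pmatrix}p&u\\0&1\end{pmatrix}$, $u$ running over representatives of $O/pO$, a cocycle $\phi$ is sent to $\delta\mapsto\sum_u\alpha_u\,\phi(\alpha_u^{-1}\delta\alpha_{v_u})$, where $v_u$ is the unique $v$ with $\alpha_u^{-1}\delta\alpha_v\in\Gamma$. *)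

(* Defs.v *)
From HB Require Import structures.
From mathcomp Require Import all_boot all_order all_algebra all_field.
From mathcomp Require Import mpoly.
From Stdlib Require Import ClassicalEpsilon.
Set Implicit Arguments. Unset Strict Implicit. Unset Printing Implicit Defensive.
Import Order.TTheory GRing.Theory Num.Theory.
Local Open Scope ring_scope.

Definition inK (d : nat) (x : algC) : Prop :=
  exists a b : rat, x = ratr a + ratr b * sqrtC (- (d%:R)).

Definition inO (d : nat) (x : algC) : Prop := inK d x /\ x \in Aint.

Definition dvdO (d : nat) (a x : algC) : Prop := exists b, inO d b /\ x = a * b.

Definition idealO (d : nat) (I : algC -> Prop) : Prop :=
  [/\ forall x, I x -> inO d x, I 0,
      forall x y, I x -> I y -> I (x + y) &
      forall a x, inO d a -> I x -> I (a * x)].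

Definition class_number_one (d : nat) : Prop :=
  forall I, idealO d I -> exists a, inO d a /\ forall x, I x <-> dvdO d a x.

(* the rational prime p is inert in K: pO is a prime ideal of O *)
Definition inert (d p : nat) : Prop :=
  ~ dvdO d (p%:R) 1 /\
  forall x y, inO d x -> inO d y -> dvdO d (p%:R) (x * y) ->
    dvdO d (p%:R) x \/ dvdO d (p%:R) y.

Definition idealNp (N : algC -> Prop) (p : nat) (x : algC) : Prop :=
  exists y, N y /\ x = p%:R * y.

Definition is_reps (d p : nat) (reps : seq algC) : Prop :=
  [/\ uniq reps, forall u, u \in reps -> inO d u,
      forall u v, u \in reps -> v \in reps -> dvdO d (p%:R) (u - v) -> u = v &
      forall x, inO d x -> exists2 u, u \in reps & dvdO d (p%:R) (x - u)].

(* (R, iota) is the completion O_p of O at p: iota is a ring morphism  *)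
(* on O, inducing isomorphisms O/p^k O ~= R/p^k R for all k, and R is   *)
(* p-adically separated and complete.                                   *)
Definition pdiv (R : comNzRingType) (p k : nat) (x : R) : Prop :=
  exists y : R, x = (p%:R) ^+ k * y.

Definition is_completion (d p : nat) (R : comNzRingType) (iota : algC -> R) : Prop :=
  [/\ iota 1 = 1,
      forall x y, inO d x -> inO d y -> iota (x + y) = iota x + iota y,
      forall x y, inO d x -> inO d y -> iota (x * y) = iota x * iota y,
      forall k (x : R), exists a, inO d a /\ pdiv p k (x - iota a) &
      forall k a, inO d a -> pdiv p k (iota a) -> dvdO d ((p ^ k)%:R) a] /\
  (forall x : R, (forall k, pdiv p k x) -> x = 0) /\
  (forall s : nat -> R, (forall k, pdiv p k (s k.+1 - s k)) ->
        exists l, forall k, pdiv p k (l - s k)).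

Definition inGamma (d : nat) (N : algC -> Prop) (p : nat) (g : 'M[algC]_2) : Prop :=
  [/\ forall i j, inO d (g i j), \det g = 1,
      idealNp N p (g 1 0), idealNp N p (g 0 0 - 1) & idealNp N p (g 1 1 - 1)].

Definition mx2 (a b c e : algC) : 'M[algC]_2 :=
  \matrix_(i < 2, j < 2)
    if val i == 0%N then (if val j == 0%N then a else b)
    else (if val j == 0%N then c else e).

Definition alpha (p : nat) (u : algC) : 'M[algC]_2 := mx2 (p%:R) u 0 1.

(* Polynomial modules.  S_g = homogeneous degree-g polynomials in      *)
(* R[x,y] (x = 'X_0, y = 'X_1).  S_{g,g} = S_g (x) S_g is realised as  *)
(* the span in R[x,y,x',y'] of f(x,y) h(x',y').                        *)
Definition inS (R : comNzRingType) (g : nat) (f : {mpoly R[2]}) : Prop :=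
  f \is g.-homog.

(* M^n_g = degree-g component of the ideal (p,x)^n of R[x,y]; the ideal *)
(* (p,x)^n is generated by the p^(n-i) x^i, 0 <= i <= n.               *)
Definition inM (R : comNzRingType) (p n g : nat) (f : {mpoly R[2]}) : Prop :=
  inS g f /\
  exists h : 'I_n.+1 -> {mpoly R[2]},
    f = \sum_(i < n.+1) ((p%:R : R) ^+ (n - i)) *: ('X_0 ^+ i * h i).

Definition tens (R : comNzRingType) (f h : {mpoly R[2]}) : {mpoly R[4]} :=
  (f \mPo [tuple 'X_0; 'X_1]) * (h \mPo [tuple 'X_2; 'X_3]).

Definition inSgg (R : comNzRingType) (g : nat) (F : {mpoly R[4]}) : Prop :=
  exists s : seq ({mpoly R[2]} * {mpoly R[2]}),
    (forall q, q \in s -> inS g q.1 /\ inS g q.2) /\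
    F = \sum_(q <- s) tens q.1 q.2.

Definition inW (R : comNzRingType) (p n g : nat) (F : {mpoly R[4]}) : Prop :=
  exists s t : seq ({mpoly R[2]} * {mpoly R[2]}),
    (forall q, q \in s -> inM p n g q.1 /\ inS g q.2) /\
    (forall q, q \in t -> inS g q.1 /\ inM p n g q.2) /\
    F = \sum_(q <- s) tens q.1 q.2 + \sum_(q <- t) tens q.1 q.2.

Definition act (R : comNzRingType) (iota : algC -> R) (gm : 'M[algC]_2)
    (F : {mpoly R[4]}) : {mpoly R[4]} :=
  F \mPo [tuple iota (gm 0 0) *: 'X_0 + iota (gm 1 0) *: 'X_1;
                iota (gm 0 1) *: 'X_0 + iota (gm 1 1) *: 'X_1;
                iota ((gm 0 0)^*) *: 'X_2 + iota ((gm 1 0)^*) *: 'X_3;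
                iota ((gm 0 1)^*) *: 'X_2 + iota ((gm 1 1)^*) *: 'X_3].

Definition cocycle (R : comNzRingType) (G : 'M[algC]_2 -> Prop)
    (Msub : {mpoly R[4]} -> Prop)
    (actf : 'M[algC]_2 -> {mpoly R[4]} -> {mpoly R[4]})
    (phi : 'M[algC]_2 -> {mpoly R[4]}) : Prop :=
  (forall gm, G gm -> Msub (phi gm)) /\
  (forall gm dl, G gm -> G dl -> phi (gm *m dl) = phi gm + actf gm (phi dl)).

(* Hecke operator T_p on cocycles:
   (T_p phi)(delta) = sum_u alpha_u . phi(alpha_u^-1 delta alpha_{v_u}),
   v_u the unique v in reps with alpha_u^-1 delta alpha_v in Gamma
   (realised as the sum over v of the terms for which this holds). *)
Definition Tp (R : comNzRingType) (iota : algC -> R) (G : 'M[algC]_2 -> Prop)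
    (p : nat) (reps : seq algC) (phi : 'M[algC]_2 -> {mpoly R[4]})
    (dl : 'M[algC]_2) : {mpoly R[4]} :=
  \sum_(u <- reps) \sum_(v <- reps)
    (let m := (alpha p u)^-1 *m dl *m alpha p v in
     if excluded_middle_informative (G m)
     then act iota (alpha p u) (phi m) else 0).

(* Main.v *)
Require Import Defs.
From HB Require Import structures.
From mathcomp Require Import all_boot all_order all_algebra all_field.
From mathcomp Require Import mpoly.
Import GRing.Theory Num.Theory.
Local Open Scope ring_scope.
From mathcomp Require Import ring.
From Stdlib Require Import ClassicalEpsilon.

Set Implicit Arguments. Unset Strict Implicit. Unset Printing Implicit Defensive.


Section OFacts.
Variable d : nat.
Hypothesis hd : (0 < d)%N.
Local Notation s := (sqrtC (- (d%:R : algC))).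

Lemma s2 : s * s = - d%:R.
Proof. by rewrite -expr2 sqrtCK. Qed.

Lemma sconj : s^* = - s.
Proof.
have h2 : s^* * s^* = s * s by rewrite -rmorphM s2 rmorphN /= conjC_nat.
have : (s^* - s) * (s^* + s) = 0.
  rewrite mulrDr !mulrBl h2; ring.
move/eqP; rewrite mulf_eq0 => /orP[|]; last by rewrite addr_eq0 => /eqP.
rewrite subr_eq0 => /eqP/CrealP.
rewrite realEsqr expr2 s2 oppr_ge0 => h.
have : (d%:R : algC) <= 0%:R := h.
by rewrite ler_nat leqn0 => /eqP hd0; move: hd; rewrite hd0.
Qed.

Lemma inK_add x y : inK d x -> inK d y -> inK d (x + y).
Proof.
move=> [a [b ->]] [a' [b' ->]]; exists (a + a'), (b + b').
rewrite !rmorphD /=; ring.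
Qed.

Lemma inK_opp x : inK d x -> inK d (- x).
Proof. move=> [a [b ->]]; exists (-a), (-b); rewrite !rmorphN /=; ring. Qed.

Lemma inK_mul x y : inK d x -> inK d y -> inK d (x * y).
Proof.
move=> [a [b ->]] [a' [b' ->]]; exists (a * a' - d%:R * b * b'), (a * b' + b * a').
rewrite !(rmorphD, rmorphB, rmorphM) /= ?rmorph_nat.
have e : ratr b * s * (ratr b' * s) = ratr b * ratr b' * (s * s) by ring.
rewrite mulrDr !mulrDl e s2; ring.
Qed.

Lemma inK_rat (a : rat) : inK d (ratr a).
Proof. by exists a, 0; rewrite rmorph0 mul0r addr0. Qed.

Lemma cjM (x y : algC) : (x * y)^* = x^* * y^*. Proof. exact: rmorphM. Qed.
Lemma cjD (x y : algC) : (x + y)^* = x^* + y^*. Proof. exact: rmorphD. Qed.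
Lemma cjr (a : rat) : (ratr a : algC)^* = ratr a.
Proof. exact: conj_Crat (Crat_rat a). Qed.

Lemma inK_conj x : inK d x -> inK d (x^*).
Proof.
move=> [a [b ->]]; exists a, (-b).
rewrite cjD (cjM (ratr b)) sconj !cjr rmorphN; ring.
Qed.

Lemma inO_add x y : inO d x -> inO d y -> inO d (x + y).
Proof. by move=> [h1 h2] [h3 h4]; split; [exact: inK_add | exact: rpredD]. Qed.
Lemma inO_opp x : inO d x -> inO d (- x).
Proof. by move=> [h1 h2]; split; [exact: inK_opp | rewrite rpredN]. Qed.
Lemma inO_sub x y : inO d x -> inO d y -> inO d (x - y).
Proof. by move=> h1 h2; apply: inO_add => //; apply: inO_opp. Qed.
Lemma inO_mul x y : inO d x -> inO d y -> inO d (x * y).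
Proof. by move=> [h1 h2] [h3 h4]; split; [exact: inK_mul | exact: rpredM]. Qed.
Lemma inO_nat n : inO d n%:R.
Proof.
split; last by rewrite rpred_nat.
by have := inK_rat n%:R; rewrite rmorph_nat.
Qed.
Lemma inO_0 : inO d 0. Proof. exact: (inO_nat 0). Qed.
Lemma inO_1 : inO d 1. Proof. exact: (inO_nat 1). Qed.
Lemma inO_conj x : inO d x -> inO d (x^*).
Proof. by move=> [h1 h2]; split; [exact: inK_conj | rewrite (Aint_aut Num.conj_op)]. Qed.

End OFacts.
#[global] Hint Resolve inO_nat inO_0 inO_1 : core.


Section IotaFacts.
Variables (d p : nat) (R : comNzRingType) (iota : algC -> R).
Hypothesis hc : is_completion d p iota.
Hypothesis hp : prime p.

Ltac hcd := have := hc; rewrite /is_completion => -[[h1 h2 h3 h4 h5] [h6 h7]].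
Lemma iota1 : iota 1 = 1. Proof. by hcd. Qed.
Lemma iotaD x y : inO d x -> inO d y -> iota (x + y) = iota x + iota y.
Proof. by hcd; apply: h2. Qed.
Lemma iotaM x y : inO d x -> inO d y -> iota (x * y) = iota x * iota y.
Proof. by hcd; apply: h3. Qed.
Lemma iota_surj k (x : R) : exists a, inO d a /\ Defs.pdiv p k (x - iota a).
Proof. by hcd; apply: h4. Qed.
Lemma iota_inj k a : inO d a -> Defs.pdiv p k (iota a) -> dvdO d ((p ^ k)%:R) a.
Proof. by hcd; apply: h5. Qed.
Lemma iota_sep (x : R) : (forall k, Defs.pdiv p k x) -> x = 0.
Proof. by hcd; apply: h6. Qed.

Lemma iota0 : iota 0 = 0.
Proof.
have h := iotaD (inO_0 d) (inO_0 d); rewrite addr0 in h.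
by apply: (addrI (iota 0)); rewrite addr0 -h.
Qed.

Lemma iotaN x : inO d x -> iota (- x) = - iota x.
Proof.
move=> hx; have := iotaD hx (inO_opp hx); rewrite subrr iota0.
by move/esym/eqP; rewrite addr_eq0 => /eqP ->; rewrite opprK.
Qed.

Lemma iotaB x y : inO d x -> inO d y -> iota (x - y) = iota x - iota y.
Proof. by move=> hx hy; rewrite iotaD ?iotaN //; exact: inO_opp. Qed.

Lemma iota_nat n : iota n%:R = n%:R.
Proof.
elim: n => [|n IH]; first exact: iota0.
rewrite -addn1 !natrD iotaD //. by rewrite IH iota1.
Qed.

Lemma p_neq0 : (p%:R : algC) != 0.
Proof. by rewrite pnatr_eq0 -lt0n prime_gt0. Qed.

Lemma torsion1 (t : R) : p%:R * t = 0 -> t = 0.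
Proof.
move=> ht; apply: iota_sep => k; rewrite /Defs.pdiv.
have [a [ha hy0]] := iota_surj k t.
move: hy0; rewrite /Defs.pdiv => -[y hy].
have e : iota (p%:R * a) = p%:R ^+ k.+1 * (- y).
  rewrite iotaM // iota_nat.
  have -> : iota a = t - p%:R ^+ k * y by rewrite -hy; ring.
  rewrite mulrBr ht exprS; ring.
have [b [hb eb]] := iota_inj (inO_mul (inO_nat d p) ha) (ex_intro _ _ e).
have ea : a = (p ^ k)%:R * b.
  apply: (mulfI p_neq0); rewrite eb natrX exprS natrX; ring.
exists (iota b + y).
rewrite mulrDr -hy ea iotaM // iota_nat natrX; ring.
Qed.

Lemma torsion n (t : R) : p%:R ^+ n * t = 0 -> t = 0.
Proof.
elim: n t => [|n IH] t; first by rewrite expr0 mul1r.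
by rewrite exprS -mulrA => /torsion1 /IH.
Qed.

End IotaFacts.


Section MP.
Variable R : comNzRingType.

Lemma comp_mpolyA n k l (f : {mpoly R[n]}) (s : n.-tuple {mpoly R[k]})
    (t : k.-tuple {mpoly R[l]}) :
  (f \mPo s) \mPo t = f \mPo [tuple (tnth s i \mPo t) | i < n].
Proof.
rewrite (comp_mpolyEX f s) raddf_sum (comp_mpolyEX f); apply: eq_bigr => m _.
rewrite /= comp_mpolyZ !comp_mpolyX rmorph_prod; congr (_ *: _).
by apply: eq_bigr => i _; rewrite rmorphXn tnth_map tnth_ord_tuple.
Qed.

Lemma homog_prod_gen n (I : Type) (r : seq I) (F : I -> {mpoly R[n]}) (D : I -> nat) :
  (forall i, F i \is (D i).-homog) ->
  \prod_(i <- r) F i \is (\sum_(i <- r) D i)%N.-homog.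
Proof.
move=> hF; elim: r => [|i r IH]; first by rewrite !big_nil dhomog1.
by rewrite !big_cons; apply: dhomogM.
Qed.

Lemma homog_comp n k (f : {mpoly R[n]}) (t : n.-tuple {mpoly R[k]}) g :
  (forall i, tnth t i \is 1.-homog) -> f \is g.-homog -> f \mPo t \is g.-homog.
Proof.
move=> ht hf; rewrite comp_mpolyE big_seq.
apply: (big_ind (fun q : {mpoly R[k]} => q \is g.-homog)).
- exact: dhomog0.
- by move=> x y; apply: dhomogD.
move=> m hm; apply: dhomogZ.
have -> : g = (\sum_(i <- index_enum 'I_n) (1 * m i))%N.
  rewrite -(dhomogP _ _ _ hf m hm) /= mdegE.
  by apply: eq_bigr => i _; rewrite mul1n.
by apply: homog_prod_gen => i; apply: dhomogMn.
Qed.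

Lemma homogX1 n (i : 'I_n) (c : R) : c *: ('X_i : {mpoly R[n]}) \is 1.-homog.
Proof. by apply: dhomogZ; rewrite dhomogX /= mdeg1. Qed.

Lemma homog_lin n (i j : 'I_n) (a b : R) :
  a *: ('X_i : {mpoly R[n]}) + b *: 'X_j \is 1.-homog.
Proof. by apply: dhomogD; apply: homogX1. Qed.

End MP.

Section ActTens.
Variable R : comNzRingType.
Variable iota : algC -> R.

Definition lin2 (a b c e : R) : 2.-tuple {mpoly R[2]} :=
  [tuple a *: 'X_0 + b *: 'X_1; c *: 'X_0 + e *: 'X_1].

Lemma act_tens gm (f h : {mpoly R[2]}) :
  act iota gm (tens f h) =
  tens (f \mPo lin2 (iota (gm 0 0)) (iota (gm 1 0)) (iota (gm 0 1)) (iota (gm 1 1)))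
       (h \mPo lin2 (iota (gm 0 0)^*) (iota (gm 1 0)^*) (iota (gm 0 1)^*) (iota (gm 1 1)^*)).
Proof.
rewrite /act /tens rmorphM /= !comp_mpolyA; congr (_ * _); congr (comp_mpoly _ _);
  apply: eq_from_tnth => i; rewrite !tnth_map !tnth_ord_tuple;
  case: i => [[|[|i]] hi] //=; rewrite !(tnth_nth 0) /=;
  by rewrite !comp_mpolyD !comp_mpolyZ !comp_mpolyXU.
Qed.

Lemma act0 gm : act iota gm 0 = 0.
Proof. by rewrite /act raddf0. Qed.
Lemma actD gm F G : act iota gm (F + G) = act iota gm F + act iota gm G.
Proof. by rewrite /act raddfD. Qed.
Lemma actB gm F G : act iota gm (F - G) = act iota gm F - act iota gm G.
Proof. by rewrite /act raddfB. Qed.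
Lemma actZ gm k F : act iota gm (k *: F) = k *: act iota gm F.
Proof. by rewrite /act comp_mpolyZ. Qed.
Lemma act_sum gm (I : Type) (r : seq I) (P : pred I) (F : I -> {mpoly R[4]}) :
  act iota gm (\sum_(i <- r | P i) F i) = \sum_(i <- r | P i) act iota gm (F i).
Proof. by rewrite /act raddf_sum. Qed.

End ActTens.

Section MDiv.
Variable R : comNzRingType.

Lemma lin2_homog (a b c e : R) i : tnth (lin2 a b c e) i \is 1.-homog.
Proof. by case: i => [[|[|i]] hi] //=; rewrite (tnth_nth 0) /=; apply: homog_lin. Qed.

Lemma inS_comp g (f : {mpoly R[2]}) a b c e : inS g f -> inS g (f \mPo lin2 a b c e).
Proof. by move=> hf; apply: homog_comp => //; apply: lin2_homog. Qed.

Lemma M_comp (p n g : nat) (f : {mpoly R[2]}) (c e : R) :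
  inM p n g f -> exists A, inS g A /\ f \mPo lin2 (p%:R) 0 c e = (p%:R)^+n *: A.
Proof.
move=> [hS [h hf]].
set t := lin2 (p%:R) 0 c e.
pose A' := \sum_(i < n.+1) ('X_0 ^+ i * (h i \mPo t)).
have e1 : f \mPo t = (p%:R)^+n *: A'.
  rewrite hf raddf_sum /= scaler_sumr; apply: eq_bigr => i _.
  rewrite comp_mpolyZ rmorphM rmorphXn /= comp_mpolyXU.
  rewrite [t`_0]/= scale0r addr0 exprZn -scalerAl scalerA -exprD subnK //.
  by rewrite -ltnS.
exists (pihomog mdeg g A'); split; first exact: pihomogP.
have hh : f \mPo t \is g.-homog by apply: inS_comp.
by rewrite -(pihomog_dE hh) e1 linearZ.
Qed.

End MDiv.

Section Sgg.
Variable R : comNzRingType.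
Variable g : nat.

Lemma inSgg0 : inSgg (R:=R) g 0.
Proof. by exists [::]; rewrite big_nil; split => // q; rewrite in_nil. Qed.

Lemma inSggD (F G : {mpoly R[4]}) : inSgg g F -> inSgg g G -> inSgg g (F + G).
Proof.
move=> [s [hs ->]] [t [ht ->]]; exists (s ++ t); split; last by rewrite big_cat.
by move=> q; rewrite mem_cat => /orP[/hs|/ht].
Qed.

Lemma inSgg_tens (f h : {mpoly R[2]}) : inS g f -> inS g h -> inSgg g (tens f h).
Proof.
move=> hf hh; exists [:: (f, h)]; split; last by rewrite big_seq1.
by move=> q; rewrite mem_seq1 => /eqP ->.
Qed.

Definition pS (k : R) (F : {mpoly R[4]}) := exists Y, inSgg g Y /\ F = k *: Y.

Lemma pS0 k : pS k 0.
Proof. by exists 0; split; [exact: inSgg0 | rewrite scaler0]. Qed.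

Lemma pSD k F G : pS k F -> pS k G -> pS k (F + G).
Proof.
move=> [Y [hY ->]] [Z [hZ ->]]; exists (Y + Z); split; last by rewrite scalerDr.
exact: inSggD.
Qed.

Lemma pS_sum k (I : eqType) (r : seq I) (P : pred I) (F : I -> {mpoly R[4]}) :
  (forall i, i \in r -> P i -> pS k (F i)) -> pS k (\sum_(i <- r | P i) F i).
Proof.
move=> hF; rewrite big_seq_cond.
apply: (big_ind (pS k)); [exact: pS0 | exact: pSD |].
by move=> i /andP[]; apply: hF.
Qed.

Lemma tensZl k (f h : {mpoly R[2]}) : tens (k *: f) h = k *: tens f h.
Proof. by rewrite /tens comp_mpolyZ scalerAl. Qed.

Lemma tensZr k (f h : {mpoly R[2]}) : tens f (k *: h) = k *: tens f h.
Proof. by rewrite /tens comp_mpolyZ scalerAr. Qed.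

End Sgg.

Lemma alpha00 p u : alpha p u 0 0 = p%:R. Proof. by rewrite /alpha /mx2 mxE. Qed.
Lemma alpha01 p u : alpha p u 0 1 = u. Proof. by rewrite /alpha /mx2 mxE. Qed.
Lemma alpha10 p u : alpha p u 1 0 = 0. Proof. by rewrite /alpha /mx2 mxE. Qed.
Lemma alpha11 p u : alpha p u 1 1 = 1. Proof. by rewrite /alpha /mx2 mxE. Qed.

Section ActW.
Variable R : comNzRingType.
Variable iota : algC -> R.
Variables p n g : nat.
Hypothesis ip : iota p%:R = p%:R.
Hypothesis i0 : iota 0 = 0.

Lemma act_alpha_W u F : inW p n g F -> pS g ((p%:R : R) ^+ n) (act iota (alpha p u) F).
Proof.
have ipc : iota (p%:R)^* = p%:R by rewrite conjC_nat.
have i0c : iota 0^* = 0 by rewrite conjC0.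
move=> [s [t [hs [ht ->]]]].
rewrite actD !act_sum; apply: pSD; apply: pS_sum => q hq _;
  rewrite act_tens alpha00 alpha10 ip i0 ipc i0c.
- have [hM hS2] := hs q hq.
  have [A [hA ->]] := M_comp (iota (alpha p u 0 1)) (iota (alpha p u 1 1)) hM.
  rewrite tensZl; exists (tens A (q.2 \mPo lin2 (p%:R) 0 (iota (alpha p u 0 1)^*) (iota (alpha p u 1 1)^*))).
  by split => //; apply: inSgg_tens => //; apply: inS_comp.
- have [hS1 hM] := ht q hq.
  have [A [hA ->]] := M_comp (iota (alpha p u 0 1)^*) (iota (alpha p u 1 1)^*) hM.
  rewrite tensZr; exists (tens (q.1 \mPo lin2 (p%:R) 0 (iota (alpha p u 0 1)) (iota (alpha p u 1 1))) A).
  by split => //; apply: inSgg_tens => //; apply: inS_comp.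
Qed.

End ActW.


Lemma ord2 (i : 'I_2) : i = 0 \/ i = 1.
Proof. by case: i => [[|[|i]] hi]; [left|right|]; try apply: val_inj. Qed.

Lemma mx2E a b c e :
  [/\ mx2 a b c e 0 0 = a, mx2 a b c e 0 1 = b, mx2 a b c e 1 0 = c & mx2 a b c e 1 1 = e].
Proof. by rewrite /mx2 !mxE. Qed.

Lemma mx2_eta (M : 'M[algC]_2) : M = mx2 (M 0 0) (M 0 1) (M 1 0) (M 1 1).
Proof.
apply/matrixP => i j; rewrite /mx2 mxE.
by case: (ord2 i) => ->; case: (ord2 j) => ->.
Qed.

Lemma mx2_mul a b c e a' b' c' e' :
  mx2 a b c e *m mx2 a' b' c' e' =
  mx2 (a * a' + b * c') (a * b' + b * e') (c * a' + e * c') (c * b' + e * e').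
Proof.
apply/matrixP => i j; rewrite !mxE !big_ord_recl big_ord0 addr0 /mx2 !mxE /=.
by case: (ord2 i) => ->; case: (ord2 j) => ->.
Qed.

Lemma mx2_inj a b c e a' b' c' e' :
  a = a' -> b = b' -> c = c' -> e = e' -> mx2 a b c e = mx2 a' b' c' e'.
Proof. by move=> -> -> -> ->. Qed.

Lemma mx2_one : (1 : 'M[algC]_2) = mx2 1 0 0 1.
Proof.
apply/matrixP => i j; rewrite /mx2 !mxE.
by case: (ord2 i) => ->; case: (ord2 j) => ->.
Qed.

Lemma mx2_det a b c e : \det (mx2 a b c e) = a * e - b * c.
Proof.
rewrite (expand_det_row _ 0) !big_ord_recl big_ord0 addr0.
rewrite /cofactor !det_mx11 /= !mxE /= /bump /= expr0 expr1; ring.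
Qed.

Section Alpha.
Variable p : nat.
Hypothesis hp0 : (p%:R : algC) != 0.

Lemma alpha_inv u : (alpha p u)^-1 = mx2 (p%:R^-1) (- u / p%:R) 0 1.
Proof.
set B := mx2 _ _ _ _.
have h1 : alpha p u * B = 1.
  rewrite /alpha -mulmxE mx2_mul mx2_one; apply: mx2_inj; field => //.
have h2 : B * alpha p u = 1.
  rewrite /alpha -mulmxE mx2_mul mx2_one; apply: mx2_inj; field => //.
have hu : alpha p u \is a GRing.unit by apply/GRing.unitrP; exists B.
by rewrite -[B](mulKr hu) h1 mulr1.
Qed.

Lemma Mform u v a b c e :
  (alpha p u)^-1 *m mx2 a b c e *m alpha p v =
  mx2 (a - u * c) (((a - u * c) * v + b - u * e) / p%:R) (c * p%:R) (c * v + e).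
Proof.
rewrite alpha_inv /alpha !mx2_mul; apply: mx2_inj; field => //.
Qed.

End Alpha.

Section Gamma.
Variables (d p : nat) (N : algC -> Prop).
Hypothesis hN : idealO d N.
Hypothesis hp : prime p.
Hypothesis hin : inert d p.

Local Notation Np := (idealNp N p).
Local Notation G := (inGamma d N p).

Lemma hp0 : (p%:R : algC) != 0.
Proof. by rewrite pnatr_eq0 -lt0n prime_gt0. Qed.

Lemma N_O x : N x -> inO d x. Proof. by case: hN => h _ _ _; apply: h. Qed.
Lemma N_add x y : N x -> N y -> N (x + y). Proof. by case: hN => _ _ h _; apply: h. Qed.
Lemma N_mul a x : inO d a -> N x -> N (a * x). Proof. by case: hN => _ _ _ h; apply: h. Qed.
Lemma N_opp x : N x -> N (- x).
Proof. by move=> hx; rewrite -mulN1r; apply: N_mul => //; apply: inO_opp. Qed.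

Lemma Np_O x : Np x -> inO d x.
Proof. by move=> [y [hy ->]]; apply: inO_mul => //; apply: N_O. Qed.
Lemma Np_add x y : Np x -> Np y -> Np (x + y).
Proof. by move=> [a [ha ->]] [b [hb ->]]; exists (a + b); rewrite mulrDr; split => //; apply: N_add. Qed.
Lemma Np_mul a x : inO d a -> Np x -> Np (a * x).
Proof. by move=> hA [b [hb ->]]; exists (a * b); split; [apply: N_mul | ring]. Qed.
Lemma Np_opp x : Np x -> Np (- x).
Proof. by move=> hx; rewrite -mulN1r; apply: Np_mul => //; apply: inO_opp. Qed.
Lemma Np_sub x y : Np x -> Np y -> Np (x - y).
Proof. by move=> hx hy; apply: Np_add => //; apply: Np_opp. Qed.

Lemma Gunpack a b c e : G (mx2 a b c e) ->
  [/\ inO d a, inO d b, inO d c & inO d e] /\ [/\ a * e - b * c = 1, Np c, Np (a - 1) & Np (e - 1)].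
Proof.
case=> hO hdet h10 h00 h11; have [e00 e01 e10 e11] := mx2E a b c e.
rewrite mx2_det in hdet; rewrite e10 in h10; rewrite e00 in h00; rewrite e11 in h11.
split; split => //; [rewrite -e00 | rewrite -e01 | rewrite -e10 | rewrite -e11]; apply: hO.
Qed.

Lemma Gpack a b c e :
  inO d a -> inO d b -> inO d c -> inO d e -> a * e - b * c = 1 -> Np c -> Np (a - 1) -> Np (e - 1) ->
  G (mx2 a b c e).
Proof.
move=> ha hb hc he hdet h10 h00 h11; have [e00 e01 e10 e11] := mx2E a b c e.
split; rewrite ?e00 ?e01 ?e10 ?e11 ?mx2_det //.
by move=> i j; case: (ord2 i) => ->; case: (ord2 j) => ->; rewrite ?e00 ?e01 ?e10 ?e11.
Qed.

Lemma G_entries g : G g -> forall i j, inO d (g i j).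
Proof. by case. Qed.

Lemma G_mul g h : G g -> G h -> G (g *m h).
Proof.
rewrite (mx2_eta g) (mx2_eta h) mx2_mul.
move: (g 0 0) (g 0 1) (g 1 0) (g 1 1) (h 0 0) (h 0 1) (h 1 0) (h 1 1) => a b c e a' b' c' e'.
move=> /Gunpack [[ha hb hc he] [hd h10 h00 h11]] /Gunpack [[ha' hb' hc' he'] [hd' h10' h00' h11']].
apply: Gpack; do ?[apply: inO_add | apply: inO_mul] => //.
- rewrite -[1]mulr1 -{1}hd -hd'; ring.
- by apply: Np_add; [rewrite mulrC|]; apply: Np_mul.
- have -> : a * a' + b * c' - 1 = a' * (a - 1) + (a' - 1) + b * c' by ring.
  by apply: Np_add; [apply: Np_add => //; apply: Np_mul | apply: Np_mul].
- have -> : c * b' + e * e' - 1 = b' * c + e' * (e - 1) + (e' - 1) by ring.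
  by apply: Np_add => //; apply: Np_add; apply: Np_mul.
Qed.

Lemma no_unit x : dvdO d p%:R x -> Np (x - 1) -> False.
Proof.
move=> [z [hz ->]] [y [hy e]]; case: hin => h1 _; apply: h1.
exists (z - y); split; first by apply: inO_sub => //; apply: N_O.
by rewrite mulrBr -e; ring.
Qed.

Variable reps : seq algC.
Hypothesis hreps : is_reps d p reps.

Lemma reps_O u : u \in reps -> inO d u.
Proof. by case: hreps => _ h _ _; apply: h. Qed.

Lemma Mexists a b c e u : G (mx2 a b c e) -> inO d u ->
  exists2 v, v \in reps & G ((alpha p u)^-1 *m mx2 a b c e *m alpha p v).
Proof.
move=> /Gunpack [[ha hb hc he] [hd h10 h00 h11]] hu.
have hx : inO d (u * e - b) by apply: inO_sub => //; apply: inO_mul.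
case: hreps => _ _ _ hs; have [v hv [w [hw ew]]] := hs _ hx.
have hvO := reps_O hv.
exists v => //; rewrite (Mform hp0).
have hy : Np (a - u * c - 1).
  have -> : a - u * c - 1 = (a - 1) - u * c by ring.
  by apply: Np_sub => //; apply: Np_mul.
have [y [hyN ey]] := hy.
have ea : a - u * c = p%:R * y + 1 by rewrite -ey; ring.
have eb : b = u * e - v - p%:R * w by rewrite -ew; ring.
have e01 : ((a - u * c) * v + b - u * e) / p%:R = y * v - w.
  rewrite ea eb; field; exact: hp0.
rewrite e01; apply: Gpack.
- by apply: inO_sub => //; apply: inO_mul.
- by apply: inO_sub; [apply: inO_mul => //; apply: N_O | ].
- exact: inO_mul.
- by apply: inO_add => //; apply: inO_mul.
- rewrite -e01.
  have -> : ((a - u * c) * v + b - u * e) / p%:R * (c * p%:R) = ((a - u * c) * v + b - u * e) * c.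
    by field; exact: hp0.
  rewrite -hd; ring.
- by rewrite [c * _]mulrC; apply: Np_mul.
- exact: hy.
- have -> : c * v + e - 1 = v * c + (e - 1) by ring.
  by apply: Np_add => //; apply: Np_mul.
Qed.

Lemma Muniq a b c e u v v' : G (mx2 a b c e) -> inO d u -> v \in reps -> v' \in reps ->
  G ((alpha p u)^-1 *m mx2 a b c e *m alpha p v) ->
  G ((alpha p u)^-1 *m mx2 a b c e *m alpha p v') -> v = v'.
Proof.
move=> /Gunpack [[ha hb hc he] [hd h10 h00 h11]] hu hv hv'.
rewrite !(Mform hp0) => /Gunpack [[h1 h2 _ _] [_ _ h3 _]] /Gunpack [[_ h2' _ _] _].
have hdv : dvdO d p%:R ((a - u * c) * (v' - v)).
  exists (((a - u * c) * v' + b - u * e) / p%:R - ((a - u * c) * v + b - u * e) / p%:R).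
  split; first exact: inO_sub.
  field; exact: hp0.
case: hin => _ hpr.
have hvO := reps_O hv; have hvO' := reps_O hv'.
case: (hpr _ _ h1 (inO_sub hvO' hvO) hdv) => [hx|hx].
  by case: (no_unit hx h3).
case: hreps => _ _ hinj _; apply/esym; exact: hinj.
Qed.

Lemma Minj a b c e u u' v : G (mx2 a b c e) -> u \in reps -> u' \in reps -> inO d v ->
  G ((alpha p u)^-1 *m mx2 a b c e *m alpha p v) ->
  G ((alpha p u')^-1 *m mx2 a b c e *m alpha p v) -> u = u'.
Proof.
move=> /Gunpack [[ha hb hc he] [hd h10 h00 h11]] hu hu' hv.
rewrite !(Mform hp0) => /Gunpack [[_ h2 _ h4] [_ _ _ h5]] /Gunpack [[_ h2' _ _] _].
have huO := reps_O hu; have huO' := reps_O hu'.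
have hdv : dvdO d p%:R ((u' - u) * (c * v + e)).
  exists (((a - u * c) * v + b - u * e) / p%:R - ((a - u' * c) * v + b - u' * e) / p%:R).
  split; first exact: inO_sub.
  field; exact: hp0.
case: hin => _ hpr.
case: (hpr _ _ (inO_sub huO' huO) h4 hdv) => [hx|hx]; last by case: (no_unit hx h5).
case: hreps => _ _ hinj _; apply/esym; exact: hinj.
Qed.

End Gamma.


Lemma mul2E (A B : 'M[algC]_2) i j : (A *m B) i j = A i 0 * B 0 j + A i 1 * B 1 j.
Proof.
rewrite mxE !big_ord_recl big_ord0 addr0.
have e0 : (ord0 : 'I_2) = 0 by apply: val_inj.
have e1 : (lift ord0 (ord0 : 'I_1)) = 1 :> 'I_2 by apply: val_inj.
by rewrite e0 e1.
Qed.

Section ActComp.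
Variables (d p : nat) (R : comNzRingType) (iota : algC -> R).
Hypothesis hd : (0 < d)%N.
Hypothesis hc : is_completion d p iota.

Lemma iota_mul2 (g h : 'M[algC]_2) i j :
  (forall i j, inO d (g i j)) -> (forall i j, inO d (h i j)) ->
  iota ((g *m h) i j) = iota (g i 0) * iota (h 0 j) + iota (g i 1) * iota (h 1 j).
Proof.
move=> hg hh; rewrite mul2E (@iotaD _ _ _ _ hc) ?(@iotaM _ _ _ _ hc) //; exact: inO_mul.
Qed.

Lemma iota_mul2c (g h : 'M[algC]_2) i j :
  (forall i j, inO d (g i j)) -> (forall i j, inO d (h i j)) ->
  iota ((g *m h) i j)^* = iota (g i 0)^* * iota (h 0 j)^* + iota (g i 1)^* * iota (h 1 j)^*.
Proof.
move=> hg hh; rewrite mul2E cjD !cjM (@iotaD _ _ _ _ hc) ?(@iotaM _ _ _ _ hc) //;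
  do ?[apply: inO_mul | apply: inO_conj] => //.
Qed.

Lemma act_comp (g h : 'M[algC]_2) F :
  (forall i j, inO d (g i j)) -> (forall i j, inO d (h i j)) ->
  act iota g (act iota h F) = act iota (g *m h) F.
Proof.
move=> hg hh; rewrite /act comp_mpolyA; congr comp_mpoly.
apply: eq_from_tnth => i; rewrite tnth_map tnth_ord_tuple.
case: i => [[|[|[|[|i]]]] hi] //; rewrite !(tnth_nth 0) /=;
  rewrite !comp_mpolyD !comp_mpolyZ !comp_mpolyXU /=;
  rewrite ?iota_mul2 ?iota_mul2c //;
  rewrite -!mul_mpolyC !rmorphD !rmorphM /=; ring.
Qed.

End ActComp.


Section Hecke.
Variables (d p : nat) (R : comNzRingType) (iota : algC -> R) (N : algC -> Prop) (reps : seq algC).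
Hypothesis hd : (0 < d)%N.
Hypothesis hc : is_completion d p iota.
Hypothesis hN : idealO d N.
Hypothesis hp : prime p.
Hypothesis hin : inert d p.
Hypothesis hreps : is_reps d p reps.

Local Notation G := (inGamma d N p).
Local Notation M u v dl := ((alpha p u)^-1 *m dl *m alpha p v).

Lemma MexistsG dl u : G dl -> inO d u -> exists2 v, v \in reps & G (M u v dl).
Proof. by rewrite (mx2_eta dl) => hdl hu; apply: (Mexists hN hp hreps). Qed.

Lemma MuniqG dl u v v' : G dl -> inO d u -> v \in reps -> v' \in reps ->
  G (M u v dl) -> G (M u v' dl) -> v = v'.
Proof. by rewrite (mx2_eta dl); apply: (Muniq hN hp hin hreps). Qed.

Lemma MinjG dl u u' v : G dl -> u \in reps -> u' \in reps -> inO d v ->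
  G (M u v dl) -> G (M u' v dl) -> u = u'.
Proof. by rewrite (mx2_eta dl); apply: (Minj hN hp hin hreps). Qed.

Lemma Mcomp u v w d1 d2 : M u v d1 *m M v w d2 = M u w (d1 *m d2).
Proof.
have hp0' := hp0 hp.
rewrite (mx2_eta d1) (mx2_eta d2) mx2_mul !(Mform hp0') mx2_mul.
apply: mx2_inj; field => //.
Qed.

Lemma alphaM u v dl : alpha p u *m M u v dl = dl *m alpha p v.
Proof.
have hp0' := hp0 hp.
rewrite (mx2_eta dl) (Mform hp0') /alpha !mx2_mul.
apply: mx2_inj; field => //.
Qed.

Lemma alphaO u : inO d u -> forall i j, inO d (alpha p u i j).
Proof.
move=> hu i j; case: (ord2 i) => ->; case: (ord2 j) => ->;
  by rewrite ?alpha00 ?alpha01 ?alpha10 ?alpha11.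
Qed.

Definition sigu (dl : 'M[algC]_2) (u : algC) : algC :=
  match excluded_middle_informative (exists v, v \in reps /\ G (M u v dl)) with
  | left h => proj1_sig (constructive_indefinite_description _ h)
  | right _ => 0
  end.

Lemma sigP dl u : G dl -> u \in reps -> sigu dl u \in reps /\ G (M u (sigu dl u) dl).
Proof.
move=> hdl hu; rewrite /sigu; case: excluded_middle_informative => [h|hn].
  by case: constructive_indefinite_description.
exfalso; apply: hn; have [v hv hG] := MexistsG hdl (reps_O hreps hu).
by exists v.
Qed.

Lemma reps_uniq : uniq reps. Proof. by case: hreps. Qed.

Variable phi : 'M[algC]_2 -> {mpoly R[4]}.
Hypothesis hphi : forall gm dl, G gm -> G dl -> phi (gm *m dl) = phi gm + act iota gm (phi dl).

Lemma Tp_collapse dl : G dl -> Tp iota G p reps phi dl =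
  \sum_(u <- reps) act iota (alpha p u) (phi (M u (sigu dl u) dl)).
Proof.
move=> hdl; rewrite /Tp; apply: eq_big_seq => u hu.
have [hs hG] := sigP hdl hu.
rewrite (bigD1_seq (sigu dl u)) //=; last exact: reps_uniq.
rewrite big1_seq ?addr0.
  by case: excluded_middle_informative.
move=> v /andP[hv hvr]; case: excluded_middle_informative => // hG'.
exfalso; move/negP: hv; apply.
apply/eqP; exact: (MuniqG hdl (reps_O hreps hu) hvr hs hG' hG).
Qed.

Lemma sig_mul d1 d2 u : G d1 -> G d2 -> u \in reps ->
  sigu (d1 *m d2) u = sigu d2 (sigu d1 u).
Proof.
move=> h1 h2 hu.
have [hs1 hG1] := sigP h1 hu.
have [hs2 hG2] := sigP h2 hs1.
have h12 := G_mul hN h1 h2.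
have [hs hG] := sigP h12 hu.
apply: (MuniqG h12 (reps_O hreps hu) hs hs2 hG).
by rewrite -(Mcomp _ (sigu d1 u)); apply: G_mul.
Qed.

Lemma sig_perm d1 : G d1 -> perm_eq (map (sigu d1) reps) reps.
Proof.
move=> h1.
have hinj : {in reps &, injective (sigu d1)}.
  move=> u u' hu hu' e.
  have [hs hG] := sigP h1 hu; have [hs' hG'] := sigP h1 hu'.
  rewrite -e in hG'.
  exact: (MinjG h1 hu hu' (reps_O hreps hs) hG hG').
have hu : uniq (map (sigu d1) reps) by rewrite (map_inj_in_uniq hinj) reps_uniq.
apply: uniq_perm => //; first exact: reps_uniq.
have hsub : {subset map (sigu d1) reps <= reps}.
  by move=> v /mapP [u hu' ->]; case: (sigP h1 hu').
have hsz : (size reps <= size (map (sigu d1) reps))%N by rewrite size_map.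
by have [_ heq] := uniq_min_size hu hsub hsz.
Qed.

Lemma Tp_cocycle d1 d2 : G d1 -> G d2 ->
  Tp iota G p reps phi (d1 *m d2) = Tp iota G p reps phi d1 + act iota d1 (Tp iota G p reps phi d2).
Proof.
move=> h1 h2.
rewrite !Tp_collapse //; last exact: G_mul.
pose F v := act iota (alpha p v) (phi (M v (sigu d2 v) d2)).
transitivity (\sum_(u <- reps) (act iota (alpha p u) (phi (M u (sigu d1 u) d1)) +
     act iota d1 (F (sigu d1 u)))).
  apply: eq_big_seq => u hu.
  have [hs1 hG1] := sigP h1 hu.
  have [hs2 hG2] := sigP h2 hs1.
  rewrite sig_mul // -(Mcomp _ (sigu d1 u)) hphi // actD; congr (_ + _).
  rewrite /F (act_comp hd hc); last exact: G_entries hG1.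
    rewrite alphaM -(act_comp hd hc) //; first exact: G_entries h1.
    exact: alphaO (reps_O hreps hs1).
  exact: alphaO (reps_O hreps hu).
rewrite big_split /=; congr (_ + _).
rewrite -act_sum; congr (act iota d1 _).
by rewrite -(big_map (sigu d1) predT F); apply: perm_big; apply: sig_perm.
Qed.

End Hecke.

Unset Implicit Arguments. Set Strict Implicit. Set Printing Implicit Defensive.

Theorem lemma4p1 (d p : nat) (R : comNzRingType) (iota : algC -> R)
    (N : algC -> Prop) (reps : seq algC) (n g : nat) :
  (0 < d)%N -> class_number_one d ->
  prime p -> odd p -> inert d p ->
  is_completion d p iota ->
  idealO d N -> (exists x, N x /\ x <> 0) ->
  is_reps d p reps ->
  (1 <= n)%N -> (n <= g)%N ->
  forall phi : 'M[algC]_2 -> {mpoly R[4]},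
    cocycle (inGamma d N p) (inW p n g) (act iota) phi ->
    exists psi : 'M[algC]_2 -> {mpoly R[4]},
      cocycle (inGamma d N p) (inSgg g) (act iota) psi /\
      exists r : R, r != 0 /\
      exists m : {mpoly R[4]}, inSgg g m /\
        forall gm, inGamma d N p gm ->
          r *: (Tp iota (inGamma d N p) p reps phi gm - (p%:R : R) ^+ n *: psi gm)
          = act iota gm m - m.
Proof.
move=> hd _ hp _ hin hc hN _ hreps _ _ phi [hW hphi].
set T := Tp iota (inGamma d N p) p reps phi.
have hTS : forall dl, pS g ((p%:R : R) ^+ n) (T dl).
  move=> dl; rewrite /T /Tp; apply: pS_sum => u _ _; apply: pS_sum => v _ _ /=.
  case: excluded_middle_informative => h; last exact: pS0.
  by apply: (act_alpha_W (iota_nat hc p) (iota0 hc)); apply: hW.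
pose psi dl := proj1_sig (constructive_indefinite_description _ (hTS dl)).
have hpsi dl : inSgg g (psi dl) /\ T dl = (p%:R : R) ^+ n *: psi dl.
  exact: (proj2_sig (constructive_indefinite_description _ (hTS dl))).
exists psi; split.
  split; first by move=> gm _; exact: (hpsi gm).1.
  move=> gm dl hgm hdl.
  have h0 : (p%:R : R) ^+ n *: (psi (gm *m dl) - (psi gm + act iota gm (psi dl))) = 0.
    rewrite scalerBr scalerDr -actZ -!(hpsi _).2.
    by rewrite /T (Tp_cocycle hd hc hN hp hin hreps hphi hgm hdl) subrr.
  apply/eqP; rewrite -subr_eq0; apply/eqP/mpolyP => m.
  have := congr1 (mcoeff m) h0; rewrite mcoeffZ mcoeff0 => /(torsion hc hp).
  by [].
exists 1; split; first exact: oner_neq0.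
exists 0; split; first exact: inSgg0.
by move=> gm _; rewrite -(hpsi gm).2 /T subrr scaler0 act0 subrr.
Qed.
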